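(* For every integer $N\ge3$ and every integer $w$ with $\gcd(w,N)=1$, \[ \frac1{N^2}\sum_{h=1}^{N-1}\frac{\cot^2(\pi hw/N)}{h^2}>\frac1{6N^2}. \] *)

(* Defs.v *)
From Stdlib Require Import Reals ZArith Znumtheory.
Open Scope R_scope.
Definition cot (x : R) : R := cos x / sin x.

(* Main.v *)
Require Import Defs.
From Stdlib Require Import Reals ZArith Znumtheory Lra Lia Psatz.
Open Scope R_scope.

Lemma pi_ub : PI < 3.4.
Proof.
  destruct (PI_ineq 2) as [_ H]. unfold tg_alt, PI_tg in H. simpl in H. lra.
Qed.

Lemma cot_PI x : cot (x + PI) = cot x.
Proof. unfold cot, Rdiv. rewrite neg_cos, neg_sin, Rinv_opp. ring. Qed.

Lemma cot_nat x n : cot (x + INR n * PI) = cot x.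
Proof.
  induction n as [|n IH].
  - simpl. f_equal. ring.
  - rewrite S_INR. replace (x + (INR n + 1) * PI) with ((x + INR n * PI) + PI) by ring.
    rewrite cot_PI. exact IH.
Qed.

Lemma cot_Z x k : cot (x + IZR k * PI) = cot x.
Proof.
  destruct (Z_le_gt_dec 0 k) as [H|H].
  - rewrite <- (Z2Nat.id k H), <- INR_IZR_INZ. apply cot_nat.
  - replace k with (- Z.of_nat (Z.to_nat (- k)))%Z by lia.
    rewrite opp_IZR, <- INR_IZR_INZ.
    set (y := x + - INR (Z.to_nat (- k)) * PI).
    rewrite <- (cot_nat y (Z.to_nat (-k))). unfold y. f_equal. ring.
Qed.

Lemma cot_neg x : cot (- x) = - cot x.
Proof. unfold cot, Rdiv. rewrite cos_neg, sin_neg, Rinv_opp. ring. Qed.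

Lemma sum_nonneg (f : nat -> R) n :
  (forall k, (k <= n)%nat -> 0 <= f k) -> 0 <= sum_f_R0 f n.
Proof.
  induction n as [|n IH]; intros Hf; simpl.
  - apply Hf; lia.
  - assert (0 <= sum_f_R0 f n) by (apply IH; intros; apply Hf; lia).
    assert (0 <= f (S n)) by (apply Hf; lia). lra.
Qed.

Lemma sum_one (f : nat -> R) n i :
  (forall k, (k <= n)%nat -> 0 <= f k) -> (i <= n)%nat -> f i <= sum_f_R0 f n.
Proof.
  induction n as [|n IH]; intros Hf Hi.
  - replace i with 0%nat by lia. simpl. lra.
  - simpl. destruct (Nat.eq_dec i (S n)) as [->|Hne].
    + assert (0 <= sum_f_R0 f n) by (apply sum_nonneg; intros; apply Hf; lia).
      lra.
    + assert (f i <= sum_f_R0 f n) by (apply IH; [intros; apply Hf; lia | lia]).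
      assert (0 <= f (S n)) by (apply Hf; lia). lra.
Qed.

Lemma sum_two (f : nat -> R) n i j :
  (forall k, (k <= n)%nat -> 0 <= f k) -> (i <= n)%nat -> (j <= n)%nat -> i <> j ->
  f i + f j <= sum_f_R0 f n.
Proof.
  induction n as [|n IH]; intros Hf Hi Hj Hij.
  - lia.
  - simpl. destruct (Nat.eq_dec i (S n)) as [->|Hne].
    + assert (f j <= sum_f_R0 f n) by (apply sum_one; [intros; apply Hf; lia | lia]). lra.
    + destruct (Nat.eq_dec j (S n)) as [->|Hne'].
      * assert (f i <= sum_f_R0 f n) by (apply sum_one; [intros; apply Hf; lia | lia]). lra.
      * assert (f i + f j <= sum_f_R0 f n) by (apply IH; [intros; apply Hf; lia | lia | lia | lia]).
        assert (0 <= f (S n)) by (apply Hf; lia). lra.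
Qed.

Lemma bezout_inv (N : nat) (w : Z) : (3 <= N)%nat -> Z.gcd w (Z.of_nat N) = 1%Z ->
  exists (a : nat) (k : Z), (1 <= a < N)%nat /\ (Z.of_nat a * w = 1 + k * Z.of_nat N)%Z.
Proof.
  intros HN Hg.
  destruct (Zis_gcd_bezout _ _ _ (Zgcd_is_gcd w (Z.of_nat N))) as [u v Huv].
  rewrite Hg in Huv.
  set (M := Z.of_nat N) in *.
  assert (HM : (3 <= M)%Z) by (unfold M; lia).
  pose proof (Z.mod_pos_bound u M ltac:(lia)) as Hb.
  pose proof (Z.div_mod u M ltac:(lia)) as Hd.
  set (r := (u mod M)%Z) in *. set (q := (u / M)%Z) in *.
  exists (Z.to_nat r), (- v - q * w)%Z.
  rewrite Z2Nat.id by lia.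
  assert (Heq : (r * w = 1 + (- v - q * w) * M)%Z) by nia.
  split; [|exact Heq].
  assert (r <> 0%Z).
  { intro Hr. rewrite Hr in Heq. set (k := (- v - q * w)%Z) in *.
    destruct (Z_le_gt_dec 0 k); nia. }
  unfold M in Hb. lia.
Qed.

Lemma cot_lb (N : nat) : (3 <= N)%nat -> INR N < 2 * PI * cot (PI / INR N) /\ 0 < cot (PI / INR N).
Proof.
  intros HN.
  assert (HNr : 3 <= INR N) by (replace 3 with (INR 3) by (simpl; lra); apply le_INR; exact HN).
  pose proof PI_RGT_0 as Hpi.
  assert (Hx0 : 0 < PI / INR N) by (apply Rdiv_lt_0_compat; lra).
  assert (Hx3 : PI / INR N <= PI / 3).
  { unfold Rdiv. apply Rmult_le_compat_l; [lra|]. apply Rinv_le_contravar; lra. }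
  assert (Hs : 0 < sin (PI / INR N)) by (apply sin_gt_0; lra).
  assert (Hsx : sin (PI / INR N) < PI / INR N) by (apply sin_lt_x; lra).
  assert (Hc : 1/2 <= cos (PI / INR N)).
  { rewrite <- cos_PI3. destruct (Rle_lt_or_eq_dec _ _ Hx3) as [Hl|He].
    - left. apply cos_decreasing_1; lra.
    - rewrite He. lra. }
  set (s := sin (PI / INR N)) in *. set (co := cos (PI / INR N)) in *.
  assert (Hcot : cot (PI / INR N) * s = co) by (unfold cot; fold s co; field; lra).
  set (c := cot (PI / INR N)) in *.
  assert (HsN : s * INR N < PI).
  { apply (Rmult_lt_compat_r (INR N)) in Hsx; [|lra].
    replace (PI / INR N * INR N) with PI in Hsx by (field; lra). exact Hsx. }
  assert (Hcp : 0 < c) by nra.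
  split; [nra | exact Hcp].
Qed.

Theorem lemma2 (N : nat) (w : Z) :
  (3 <= N)%nat -> Z.gcd w (Z.of_nat N) = 1%Z ->
  / (INR N ^ 2) *
    sum_f 1 (N - 1)
      (fun h => (cot (PI * INR h * IZR w / INR N)) ^ 2 / (INR h ^ 2))
  > / (6 * INR N ^ 2).
Proof.
  intros HN Hg.
  destruct (bezout_inv N w HN Hg) as (a & k & Ha & Hk).
  destruct (cot_lb N HN) as [Hc Hcp].
  set (c := cot (PI / INR N)) in *.
  assert (HNr : 3 <= INR N) by (replace 3 with (INR 3) by (simpl; lra); apply le_INR; exact HN).
  assert (Har : 1 <= INR a) by (replace 1 with (INR 1) by (simpl; lra); apply le_INR; lia).
  assert (HaN : INR a < INR N) by (apply lt_INR; lia).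
  assert (HR : INR a * IZR w = 1 + IZR k * INR N).
  { apply (f_equal IZR) in Hk. rewrite mult_IZR, plus_IZR, mult_IZR, <- !INR_IZR_INZ in Hk.
    exact Hk. }
  assert (H2a : (2 * a <> N)%nat).
  { intro H. assert (HZ : Z.of_nat N = (2 * Z.of_nat a)%Z) by lia.
    assert (HZ2 : (Z.of_nat N * (w - 2 * k) = 2)%Z) by (rewrite HZ in *; nia).
    destruct (Z_le_gt_dec 1 (w - 2 * k)); nia. }
  set (F := fun h => (cot (PI * INR h * IZR w / INR N)) ^ 2 / (INR h ^ 2)).
  assert (Fa : F a = c ^ 2 / INR a ^ 2).
  { unfold F. f_equal. f_equal.
    replace (PI * INR a * IZR w / INR N) with (PI / INR N + IZR k * PI).
    - apply cot_Z.
    - replace (PI * INR a * IZR w) with (PI * (INR a * IZR w)) by ring.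
      rewrite HR. field. lra. }
  assert (Fb : F (N - a)%nat = c ^ 2 / (INR N - INR a) ^ 2).
  { unfold F. rewrite minus_INR by lia. f_equal.
    replace (PI * (INR N - INR a) * IZR w / INR N) with (- (PI / INR N) + IZR (w - k) * PI).
    - rewrite cot_Z, cot_neg. fold c. ring.
    - rewrite minus_IZR.
      replace (PI * (INR N - INR a) * IZR w) with (PI * INR N * IZR w - PI * (INR a * IZR w)) by ring.
      rewrite HR. field. lra. }
  assert (Hsum : F a + F (N - a)%nat <= sum_f 1 (N - 1) F).
  { unfold sum_f.
    pose proof (sum_two (fun x => F (x + 1)%nat) (N - 1 - 1) (a - 1) (N - a - 1)) as H.
    simpl in H. replace (a - 1 + 1)%nat with a in H by lia.
    replace (N - a - 1 + 1)%nat with (N - a)%nat in H by lia.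
    apply H; try lia.
    intros m _. unfold F. unfold Rdiv. apply Rmult_le_pos; [apply pow2_ge_0|].
    apply Rlt_le, Rinv_0_lt_compat, pow_lt, lt_0_INR; lia. }
  fold F.
  rewrite Fa, Fb in Hsum.
  assert (HB : 1 <= INR N - INR a).
  { replace 1 with (INR 1) by (simpl; lra). rewrite <- minus_INR by lia. apply le_INR; lia. }
  set (T := sum_f 1 (N - 1) F) in *.
  set (A := INR a) in *. set (B := INR N - INR a) in *. set (n := INR N) in *.
  assert (HAB : A + B = n) by (unfold B, A, n; ring).
  set (p := / A). set (q := / B).
  assert (Hp : A * p = 1) by (unfold p; field; lra).
  assert (Hq : B * q = 1) by (unfold q; field; lra).
  assert (Hp0 : 0 < p) by (unfold p; apply Rinv_0_lt_compat; lra).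
  assert (Hq0 : 0 < q) by (unfold q; apply Rinv_0_lt_compat; lra).
  assert (HS : 8 <= n ^ 2 * (p ^ 2 + q ^ 2)).
  { rewrite <- HAB.
    assert (H1 : 4 * A * B <= (A + B) ^ 2) by (pose proof (pow2_ge_0 (A - B)); nra).
    assert (H2 : 2 * p * q <= p ^ 2 + q ^ 2) by (pose proof (pow2_ge_0 (p - q)); nra).
    assert (H3 : 0 <= p ^ 2 + q ^ 2) by (pose proof (pow2_ge_0 p); pose proof (pow2_ge_0 q); lra).
    assert (H4 : 4 * A * B * (p ^ 2 + q ^ 2) <= (A + B) ^ 2 * (p ^ 2 + q ^ 2)) by (apply Rmult_le_compat_r; assumption).
    assert (H5 : 4 * A * B * (2 * p * q) <= 4 * A * B * (p ^ 2 + q ^ 2)) by (apply Rmult_le_compat_l; [assert (0 <= A * B) by (apply Rmult_le_pos; lra); lra | exact H2]).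
    assert (H6 : 4 * A * B * (2 * p * q) = 8 * (A * p) * (B * q)) by ring.
    rewrite Hp, Hq in H6. lra. }
  assert (HT : c ^ 2 * (p ^ 2 + q ^ 2) <= T).
  { replace (c ^ 2 * (p ^ 2 + q ^ 2)) with (c ^ 2 / A ^ 2 + c ^ 2 / B ^ 2); [exact Hsum|].
    unfold p, q. field. lra. }
  pose proof pi_ub as Hpi. pose proof PI_RGT_0 as Hpi0.
  assert (Hc2 : n ^ 2 < 4 * PI ^ 2 * c ^ 2).
  { assert (h : n * n < (2 * PI * c) * (2 * PI * c)) by (apply Rmult_le_0_lt_compat; unfold n in *; lra).
    replace (n ^ 2) with (n * n) by ring. replace (4 * PI ^ 2 * c ^ 2) with ((2 * PI * c) * (2 * PI * c)) by ring. exact h. }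
  assert (Hc0 : 0 <= c ^ 2) by (apply pow2_ge_0).
  assert (Hn0 : 0 < n ^ 2) by (unfold n in *; apply pow_lt; lra).
  assert (H8 : 8 * c ^ 2 <= n ^ 2 * T).
  { assert (e1 : n ^ 2 * (c ^ 2 * (p ^ 2 + q ^ 2)) <= n ^ 2 * T) by (apply Rmult_le_compat_l; lra).
    assert (e2 : c ^ 2 * 8 <= c ^ 2 * (n ^ 2 * (p ^ 2 + q ^ 2))) by (apply Rmult_le_compat_l; lra).
    replace (n ^ 2 * (c ^ 2 * (p ^ 2 + q ^ 2))) with (c ^ 2 * (n ^ 2 * (p ^ 2 + q ^ 2))) in e1 by ring.
    lra. }
  assert (Hpi2 : PI ^ 2 < 12).
  { assert (PI * PI < 3.4 * 3.4) by (apply Rmult_le_0_lt_compat; lra). simpl. lra. }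
  assert (HT6 : n ^ 2 < 6 * (n ^ 2 * T)).
  { assert (e1 : PI ^ 2 * (8 * c ^ 2) <= PI ^ 2 * (n ^ 2 * T)) by (apply Rmult_le_compat_l; [apply pow2_ge_0|lra]).
    assert (e2 : PI ^ 2 * n ^ 2 < 12 * n ^ 2) by (apply Rmult_lt_compat_r; lra).
    assert (e3 : 0 < PI ^ 2) by (apply pow_lt; lra).
    assert (e4 : 0 < PI ^ 2 * (6 * (n ^ 2 * T) - n ^ 2)) by lra.
    apply Rmult_lt_reg_l with (PI ^ 2); [lra|]. lra. }
  assert (HT1 : 1 < 6 * T).
  { apply Rmult_lt_reg_l with (n ^ 2); [lra|]. lra. }
  apply Rlt_gt.
  rewrite Rinv_mult.
  assert (0 < / n ^ 2) by (apply Rinv_0_lt_compat; nra).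
  assert (0 < / 6 < T) by lra.
  nra.
Qed.
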